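(* Let $N=\{1,\dots,n\}$ and let $F:2^N\to\mathbb{R}$ be quasi-submodular. Suppose the maximization procedure (described in the context) outputs the lattice $[X_+,Y_+]$. Then every local maximum $P$ of $F$ satisfies $X_+\subseteq P\subseteq Y_+$.
   Context: For $A\subseteq N$ and $i\in N$, write $A+i=A\cup\{i\}$, $A-i=A\setminus\{i\}$, and $F(i\mid A)=F(A+i)-F(A)$. $F$ is quasi-submodular if for all $X,Y\subseteq N$ both hold: $F(X\cap Y)\ge F(X)\Rightarrow F(Y)\ge F(X\cup Y)$, and $F(X\cap Y)>F(X)\Rightarrow F(Y)>F(X\cup Y)$. A set $X\subseteq N$ is a local maximum of $F$ if $F(X-i)\le F(X)$ for all $i\in X$ and $F(X+j)\le F(X)$ for all $j\in N\setminus X$. Maximization procedure: set $X_0=\emptyset$, $Y_0=N$; for $t=0,1,2,\dots$: let $U_t=\{u\in Y_t\setminus X_t: F(u\mid Y_t-u)>0\}$ and $X_{t+1}=X_t\cup U_t$; let $D_t=\{d\in Y_t\setminus X_t: F(d\mid X_t)<0\}$ and $Y_{t+1}=Y_t\setminus D_t$; if $X_{t+1}=X_t$ and $Y_{t+1}=Y_t$, stop and output the lattice $[X_t,Y_t]=\{U: X_t\subseteq U\subseteq Y_t\}$; otherwise continue with $t+1$. *)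

(* Defs.v *)
From mathcomp Require Import all_boot all_order all_algebra.
Set Implicit Arguments. Unset Strict Implicit. Unset Printing Implicit Defensive.
Import Order.TTheory GRing.Theory Num.Theory.
Local Open Scope ring_scope.

Section Defs.
Variables (R : realFieldType) (n : nat).
Implicit Types (F : {set 'I_n} -> R) (A X Y : {set 'I_n}) (i : 'I_n).

Definition marg F i A : R := F (i |: A) - F A.

Definition quasi_submodular F : Prop :=
  forall X Y : {set 'I_n},
    (F (X :&: Y) >= F X -> F Y >= F (X :|: Y)) /\
    (F (X :&: Y) > F X -> F Y > F (X :|: Y)).

Definition local_max F X : Prop :=
  (forall i, i \in X -> F (X :\ i) <= F X) /\
  (forall j, j \notin X -> F (j |: X) <= F X).

Definition U_set F X Y : {set 'I_n} :=
  [set u in Y :\: X | 0 < marg F u (Y :\ u)].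
Definition D_set F X Y : {set 'I_n} :=
  [set d in Y :\: X | marg F d X < 0].
Definition mp_step F (p : {set 'I_n} * {set 'I_n}) : {set 'I_n} * {set 'I_n} :=
  (p.1 :|: U_set F p.1 p.2, p.2 :\: D_set F p.1 p.2).

Definition mp_outputs F (Xp Yp : {set 'I_n}) : Prop :=
  exists t : nat,
    iter t (mp_step F) (set0, setT) = (Xp, Yp) /\
    mp_step F (Xp, Yp) = (Xp, Yp).
End Defs.

(* Main.v *)
Require Import Defs.
From mathcomp Require Import all_boot all_order all_algebra.
Import Order.TTheory GRing.Theory Num.Theory.
Local Open Scope ring_scope.

Lemma step_inv (R : realFieldType) (n : nat) (F : {set 'I_n} -> R)
   (P X Y : {set 'I_n}) :
  quasi_submodular F -> local_max F P -> X \subset P -> P \subset Y ->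
  (mp_step F (X, Y)).1 \subset P /\ P \subset (mp_step F (X, Y)).2.
Proof.
move=> qs [lmD lmU] XP PY; rewrite /mp_step /=; split.
  rewrite subUset XP /=; apply/subsetP => u; rewrite inE => /andP [].
  rewrite !inE => /andP [uX uY] hm.
  apply/negPn/negP => uP.
  have [h1 _] := qs (u |: P) (Y :\ u).
  have eI : (u |: P) :&: (Y :\ u) = P.
    apply/setP => i; rewrite !inE.
    case: (eqVneq i u) => [->|iu] /=; first by rewrite (negbTE uP).
    by case iP: (i \in P) => //=; rewrite (subsetP PY).
  have eU : (u |: P) :|: (Y :\ u) = Y.
    apply/setP => i; rewrite !inE.
    case: (eqVneq i u) => [->|iu] /=; first by rewrite uY.
    by case iY: (i \in Y); rewrite ?orbT //= orbF; apply/negP => /(subsetP PY); rewrite iY.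
  rewrite eI eU in h1.
  have := h1 (lmU u uP).
  move: hm; rewrite /marg.
  have -> : u |: (Y :\ u) = Y by rewrite setD1K.
  by rewrite subr_gt0 => /lt_geF ->.
apply/subsetP => d dP; rewrite inE (subsetP PY) // andbT.
apply/negP; rewrite !inE => /andP [/andP [dX dY] hm].
have [_ h2] := qs (d |: X) (P :\ d).
have eI : (d |: X) :&: (P :\ d) = X.
  apply/setP => i; rewrite !inE.
  case: (eqVneq i d) => [->|id] /=; first by rewrite (negbTE dX).
  by case iX: (i \in X) => //=; rewrite (subsetP XP).
have eU : (d |: X) :|: (P :\ d) = P.
  apply/setP => i; rewrite !inE.
  case: (eqVneq i d) => [->|id] /=; first by rewrite dP.
  by case iX: (i \in X) => //=; rewrite (subsetP XP).
rewrite eI eU in h2.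
move: hm; rewrite /marg subr_lt0 => /h2 h.
by move: (lmD d dP); rewrite leNgt h.
Qed.

Theorem lemma8 (R : realFieldType) (n : nat) (F : {set 'I_n} -> R)
    (Xp Yp : {set 'I_n}) :
  quasi_submodular F ->
  mp_outputs F Xp Yp ->
  forall P : {set 'I_n}, local_max F P -> Xp \subset P /\ P \subset Yp.
Proof.
move=> qs [t [ht _]] P lm.
suff: forall k, (iter k (mp_step F) (set0, setT)).1 \subset P /\
                P \subset (iter k (mp_step F) (set0, setT)).2.
  by move/(_ t); rewrite ht.
elim=> [|k [IH1 IH2]] /=; first by rewrite sub0set subsetT.
move: IH1 IH2; case: (iter k _ _) => X Y /= h1 h2.
exact: step_inv.
Qed.
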